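(* Let $G$ be a finite strongly regular graph that is not isomorphic to $C_3$, $C_4$, $C_5$, nor to a disjoint union of copies of $C_3$. Then there is $m\in\{0,1,2\}$ such that $\mathrm{L}^{(m)}(G)$ is not strongly regular; i.e. applying at most two line graph transformations to $G$ yields a graph that is not strongly regular.
   Context: A finite simple graph on $v\ge1$ vertices is strongly regular with parameters $(v,k,\lambda,\mu)$, where $k,\lambda,\mu$ are nonnegative integers, if every vertex has degree $k$, every pair of adjacent vertices has exactly $\lambda$ common neighbours, and every pair of distinct non-adjacent vertices has exactly $\mu$ common neighbours; by convention the graph with no vertices is not strongly regular. $G$ need not be connected. $\mathrm{L}(G)$ has vertex set $E(G)$, two vertices adjacent iff the corresponding edges share an endpoint; $\mathrm{L}^{(0)}(G)=G$ and $\mathrm{L}^{(m)}=\mathrm{L}\circ\mathrm{L}^{(m-1)}$. $C_n$ is the cycle on $n$ vertices. *)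

(* Defs.v *)
From mathcomp Require Import all_boot.
Set Implicit Arguments. Unset Strict Implicit. Unset Printing Implicit Defensive.

Record sgraph := SGraph {
  vert : finType;
  adj : rel vert;
  adj_sym : symmetric adj;
  adj_irr : irreflexive adj }.

Definition srg_with (G : sgraph) (k lam mu : nat) : Prop :=
  [/\ 0 < #|vert G|,
      forall x : vert G, #|[set y | adj x y]| = k,
      forall x y : vert G, adj x y -> #|[set z | adj x z && adj y z]| = lam
    & forall x y : vert G, x != y -> ~~ adj x y ->
        #|[set z | adj x z && adj y z]| = mu].

Definition strongly_regular (G : sgraph) : Prop :=
  exists k lam mu, srg_with G k lam mu.

Definition isomorphic (G H : sgraph) : Prop :=
  exists f : vert G -> vert H, bijective f /\
    forall x y, adj (f x) (f y) = adj x y.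

Definition is_edge (G : sgraph) (e : {set vert G}) : bool :=
  [exists x, exists y, adj x y && (e == [set x; y])].

Definition edge_type (G : sgraph) := {e : {set vert G} | is_edge e}.

Definition line_adj (G : sgraph) : rel (edge_type G) :=
  fun e f => (e != f) && ~~ [disjoint val e & val f].

Lemma line_adj_sym (G : sgraph) : symmetric (@line_adj G).
Proof.
by move=> e f; rewrite /line_adj eq_sym disjoint_sym.
Qed.

Lemma line_adj_irr (G : sgraph) : irreflexive (@line_adj G).
Proof. by move=> e; rewrite /line_adj eqxx. Qed.

Definition line_graph (G : sgraph) : sgraph :=
  @SGraph (edge_type G) (@line_adj G) (@line_adj_sym G) (@line_adj_irr G).

Fixpoint iter_line (m : nat) (G : sgraph) : sgraph :=
  match m with 0 => G | m'.+1 => line_graph (iter_line m' G) end.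

Definition cyc_adj (n : nat) : rel 'I_n.+3 :=
  fun i j => (val j == (val i).+1 %% n.+3) || (val i == (val j).+1 %% n.+3).

Lemma cyc_adj_sym n : symmetric (@cyc_adj n).
Proof. by move=> i j; rewrite /cyc_adj orbC. Qed.

Lemma cyc_adj_irr n : irreflexive (@cyc_adj n).
Proof.
move=> i; rewrite /cyc_adj orbb; case: i => i /= Hi.
case: (ltngtP i.+1 n.+3) => H.
- by rewrite modn_small // eq_sym (gtn_eqF (ltnSn i)).
- by move: H; rewrite ltnS leqNgt Hi.
- by rewrite H modnn; case: i Hi H.
Qed.

Definition cycle_graph (n : nat) : sgraph :=
  @SGraph _ (@cyc_adj n) (@cyc_adj_sym n) (@cyc_adj_irr n).
(* C_3 = cycle_graph 0, C_4 = cycle_graph 1, C_5 = cycle_graph 2. *)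

Definition tri_adj (m : nat) : rel ('I_m * 'I_3) :=
  fun u v => (u.1 == v.1) && (u.2 != v.2).

Lemma tri_adj_sym m : symmetric (@tri_adj m).
Proof. by move=> u v; rewrite /tri_adj eq_sym [u.2 == _]eq_sym. Qed.

Lemma tri_adj_irr m : irreflexive (@tri_adj m).
Proof. by move=> u; rewrite /tri_adj !eqxx. Qed.

Definition triangles (m : nat) : sgraph :=
  @SGraph _ (@tri_adj m) (@tri_adj_sym m) (@tri_adj_irr m).

Definition disjoint_union_of_C3 (G : sgraph) : Prop :=
  exists m, isomorphic G (triangles m).

(* Main.v *)
Require Import Defs.
From mathcomp Require Import all_boot zify.
From Stdlib Require Import Classical.
Set Implicit Arguments. Unset Strict Implicit. Unset Printing Implicit Defensive.


Lemma ndisj2 (T: finType) (a b : T) (B : {set T}) :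
  ~~ [disjoint [set a; b] & B] = (a \in B) || (b \in B).
Proof.
rewrite disjoint_subset; case Ha: (a \in B); case Hb: (b \in B) => /=.
- by apply/negP => /subsetP /(_ a (set21 _ _)); rewrite inE Ha.
- by apply/negP => /subsetP /(_ a (set21 _ _)); rewrite inE Ha.
- by apply/negP => /subsetP /(_ b (set22 _ _)); rewrite inE Hb.
apply/negbF; apply/subsetP => x; rewrite !inE => /orP [] /eqP ->; by rewrite ?Ha ?Hb.
Qed.

Lemma card2_eq (T : finType) (A : {set T}) x y :
  #|A| = 2 -> x \in A -> y \in A -> x != y -> A = [set x; y].
Proof.
move=> HA Hx Hy Hxy; apply/eqP; rewrite eq_sym eqEcard subUset !sub1set Hx Hy.
by rewrite cards2 Hxy HA.
Qed.

Section Edges.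
Variable H : sgraph.
Implicit Types (a b v x y : vert H) (Z : edge_type H).

Lemma adj_neq a b : adj a b -> a != b.
Proof. by apply: contraTneq => ->; rewrite adj_irr. Qed.

Lemma mk_edge a b : adj a b -> is_edge [set a; b].
Proof. by move=> Hab; apply/existsP; exists a; apply/existsP; exists b; rewrite Hab eqxx. Qed.

Lemma edgeP Z : exists a b, adj a b /\ val Z = [set a; b].
Proof.
case: Z => /= Z /existsP [a /existsP [b /andP [Hab /eqP ->]]]; by exists a, b.
Qed.

Lemma edge_other Z v : v \in val Z -> exists h, adj v h /\ val Z = [set v; h].
Proof.
have [a [b [Hab ->]]] := edgeP Z; rewrite !inE => /orP [] /eqP ->.
  by exists b.
by exists a; rewrite adj_sym setUC.
Qed.

Lemma edge_two Z a b : a != b -> a \in val Z -> b \in val Z -> val Z = [set a; b].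
Proof.
move=> Hab Ha Hb; apply: card2_eq => //.
by have [x [y [Hxy ->]]] := edgeP Z; rewrite cards2 adj_neq.
Qed.

Lemma is_edge_adj a b : a != b -> is_edge [set a; b] -> adj a b.
Proof.
move=> Hab /existsP [x /existsP [y /andP [Hxy /eqP E]]].
have Ha : a \in [set x; y] by rewrite -E set21.
have Hb : b \in [set x; y] by rewrite -E set22.
move: Ha Hb Hab; rewrite !inE => /orP [] /eqP -> /orP [] /eqP ->; rewrite ?eqxx // => _.
by rewrite adj_sym.
Qed.

Definition mkE a b (Hab : adj a b) : edge_type H := exist (fun e => is_edge e) _ (mk_edge Hab).

Lemma card_edges_at v (W : edge_type H) :
  #|[set Z : edge_type H | v \in val Z]| = #|[set y | adj v y]|.
Proof.
pose phi y := insubd W [set v; y] : edge_type H.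
have Vphi y : adj v y -> val (phi y) = [set v; y].
  by move=> Hy; rewrite val_insubd mk_edge.
have -> : [set Z : edge_type H | v \in val Z] = phi @: [set y | adj v y].
  apply/setP => Z; rewrite inE; apply/idP/imsetP.
    move=> /edge_other [h [Hh E]]; exists h; first by rewrite inE.
    by apply: val_inj; rewrite Vphi.
  by case=> h; rewrite inE => Hh ->; rewrite Vphi // set21.
apply: card_in_imset => y1 y2; rewrite !inE => H1 H2 E.
have : y1 \in [set v; y2] by rewrite -Vphi // -E Vphi // set22.
rewrite !inE => /orP [] /eqP // E1.
by move: H1; rewrite E1 adj_irr.
Qed.

Lemma card_edges_pair a b : a != b ->
  #|[set Z : edge_type H | (a \in val Z) && (b \in val Z)]| = adj a b.
Proof.
move=> Hab; case Eab: (adj a b).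
  rewrite /= -(cards1 (mkE Eab)); apply: eq_card => Z; rewrite !inE.
  apply/andP/eqP.
    by case=> Ha Hb; apply: val_inj; rewrite /= (edge_two Hab).
  by move=> ->; rewrite /= set21 set22.
apply/eqP; rewrite cards_eq0; apply/eqP/setP => Z; rewrite !inE.
apply/negP => /andP [Ha Hb]; move: (valP Z); rewrite (edge_two Hab Ha Hb).
by move/(is_edge_adj Hab); rewrite Eab.
Qed.

Lemma line_adj_share Z1 Z2 v w : v \in val Z1 -> v \in val Z2 ->
  w \in val Z1 -> w \notin val Z2 -> line_adj Z1 Z2.
Proof.
move=> H1 H2 H3 H4; rewrite /line_adj; apply/andP; split.
  by apply: contraNneq H4 => <-.
by apply/negP => /disjointFr /(_ H1); rewrite H2.
Qed.

End Edges.

Lemma common_count (H : sgraph) d (e f g : vert H) (Hef : adj e f) (Hfg : adj f g) :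
  e != g -> (forall x : vert H, #|[set y | adj x y]| = d) ->
  #|[set Z | line_adj (mkE Hef) Z && line_adj (mkE Hfg) Z]| = d - 2 + adj e g.
Proof.
move=> Heg Hd.
set X := mkE Hef; set Y := mkE Hfg.
pose A := [set Z : edge_type H | f \in val Z].
pose B := [set Z : edge_type H | (e \in val Z) && (g \in val Z)].
have Hne := adj_neq Hef; have Hng := adj_neq Hfg.
have EGf (Z : edge_type H) : f \in val Z -> (e \in val Z) && (g \in val Z) = false.
  move=> Hf; apply/negP => /andP [He Hg]; move: Hf; rewrite (edge_two Heg He Hg) !inE.
  by rewrite eq_sym (negbTE Hne) (negbTE Hng).
have NX (Z : edge_type H) : f \notin val Z -> X != Z.
  by move=> Hf; apply: contraNneq Hf => <-; rewrite /= set22.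
have NY (Z : edge_type H) : f \notin val Z -> Y != Z.
  by move=> Hf; apply: contraNneq Hf => <-; rewrite /= set21.
have -> : [set Z | line_adj X Z && line_adj Y Z] = (A :\ X :\ Y) :|: B.
  apply/setP => Z; rewrite !inE /line_adj /= !ndisj2.
  case Hf: (f \in val Z) => /=; last first.
    by rewrite (NX Z (negbT Hf)) (NY Z (negbT Hf)) /= !andbF /= orbF andbC.
  by rewrite EGf // orbF orbT !andbT andbC (eq_sym Z) (eq_sym Z).
rewrite cardsU.
have -> : (A :\ X :\ Y) :&: B = set0.
  apply/setP => Z; rewrite !inE; case Hf: (f \in val Z); last by rewrite !andbF.
  by rewrite EGf // andbF.
rewrite cards0 subn0.
have HA : #|A| = d by rewrite card_edges_at.
have XA : X \in A by rewrite inE /= set22.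
have YA : Y \in A :\ X.
  rewrite !inE /= eqxx andbT; apply/negP => /eqP /(congr1 val) /= E.
  have : e \in [set f; g] by rewrite E set21.
  by rewrite !inE (negbTE Hne) (negbTE Heg).
have := cardsD1 X A; rewrite XA HA (cardsD1 Y) YA.
by rewrite card_edges_pair //; lia.
Qed.

Lemma not_srg_line (H : sgraph) d (e f g e' f' g' : vert H) :
  (forall x : vert H, #|[set y | adj x y]| = d) ->
  adj e f -> adj f g -> adj e g -> e != g ->
  adj e' f' -> adj f' g' -> ~~ adj e' g' -> e' != g' ->
  ~ strongly_regular (line_graph H).
Proof.
move=> Hd Hef Hfg Heg Neg Hef' Hfg' Heg' Neg' [k [l [u [_ _ Hl _]]]].
have L1 : line_adj (mkE Hef) (mkE Hfg).
  apply: (@line_adj_share _ _ _ f e); rewrite /= ?set21 ?set22 //.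
  by rewrite !inE negb_or (adj_neq Hef) Neg.
have L2 : line_adj (mkE Hef') (mkE Hfg').
  apply: (@line_adj_share _ _ _ f' e'); rewrite /= ?set21 ?set22 //.
  by rewrite !inE negb_or (adj_neq Hef') Neg'.
have := Hl _ _ L1; have := Hl _ _ L2.
rewrite /= (common_count Hef Hfg Neg Hd) (common_count Hef' Hfg' Neg' Hd).
rewrite Heg (negbTE Heg') /=; lia.
Qed.

Lemma no_edge_line (H : sgraph) : (forall x y : vert H, ~~ adj x y) ->
  ~ strongly_regular (line_graph H).
Proof.
move=> Hn [k [l [u [/card_gt0P [Z _] _ _ _]]]].
by have [a [b [Hab _]]] := edgeP Z; move: (Hn a b); rewrite Hab.
Qed.

Lemma deg1_line (G : sgraph) : (forall x : vert G, #|[set y | adj x y]| = 1) ->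
  forall x y : vert (line_graph G), ~~ adj x y.
Proof.
move=> H1 Z1 Z2; apply/negP; rewrite /= /line_adj => /andP [N D].
have [v [H1v H2v]] : exists v, v \in val Z1 /\ v \in val Z2.
  move: D; have [a [b [_ E]]] := edgeP Z1; rewrite E ndisj2 => /orP [] H.
    by exists a; split => //; move: (set21 a b); rewrite -E.
  by exists b; split => //; move: (set22 a b); rewrite -E.
have [h1 [A1 E1]] := edge_other H1v; have [h2 [A2 E2]] := edge_other H2v.
move/eqP: (H1 v); case/cards1P => w Ew.
have : h1 \in [set w] by rewrite -Ew inE.
have : h2 \in [set w] by rewrite -Ew inE.
rewrite !inE => /eqP e2 /eqP e1.
by move: N; rewrite -val_eqE E1 E2 e1 e2 eqxx.
Qed.

Lemma line3 (G : sgraph) k (x0 : vert G) : 3 <= k ->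
  (forall x : vert G, #|[set y | adj x y]| = k) ->
  exists e f g e' f' g' : vert (line_graph G),
  [/\ adj e f, adj f g, adj e g, e != g &
   [/\ adj e' f', adj f' g', ~~ adj e' g' & e' != g']].
Proof.
move=> Hk3 Hk.
set N := [set y | adj x0 y].
have Hv : #|N| = k by rewrite Hk.
have [a Ha] : exists a, a \in N by apply/card_gt0P; rewrite Hv; lia.
have [b Hb] : exists b, b \in N :\ a.
  by apply/card_gt0P; have := cardsD1 a N; rewrite Ha Hv; lia.
have [c Hc] : exists c, c \in N :\ a :\ b.
  apply/card_gt0P; have := cardsD1 b (N :\ a); have := cardsD1 a N.
  rewrite Ha Hb Hv; lia.
set M := [set y | adj a y].
have Ma : x0 \in M by rewrite inE adj_sym; rewrite inE in Ha.
have [w Hw] : exists w, w \in M :\ x0 :\ b.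
  apply/card_gt0P; have := cardsD1 b (M :\ x0); have := cardsD1 x0 M.
  rewrite Ma Hk; case: (b \in M :\ x0); lia.
rewrite !inE in Ha Hb Hc Hw.
case/andP: Hb => Nba Hb; case/and3P: Hc => Ncb Nca Hc; case/and3P: Hw => Nwb Nwx Hw.
have Nax := adj_neq Ha; have Nbx := adj_neq Hb; have Ncx := adj_neq Hc.
have Naw := adj_neq Hw.
exists (mkE Ha), (mkE Hb), (mkE Hc), (mkE Hb), (mkE Ha), (mkE Hw).
have Lab : line_adj (mkE Ha) (mkE Hb).
  apply: (@line_adj_share _ _ _ x0 a); rewrite /= ?set21 ?set22 //.
  by rewrite !inE negb_or eq_sym Nax eq_sym Nba.
have Lbc : line_adj (mkE Hb) (mkE Hc).
  apply: (@line_adj_share _ _ _ x0 b); rewrite /= ?set21 ?set22 //.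
  by rewrite !inE negb_or eq_sym Nbx eq_sym Ncb.
have Lac : line_adj (mkE Ha) (mkE Hc).
  apply: (@line_adj_share _ _ _ x0 a); rewrite /= ?set21 ?set22 //.
  by rewrite !inE negb_or eq_sym Nax eq_sym Nca.
have Law : line_adj (mkE Ha) (mkE Hw).
  apply: (@line_adj_share _ _ _ a x0); rewrite /= ?set21 ?set22 //.
  by rewrite !inE negb_or Nax eq_sym Nwx.
have Nbw : ~~ line_adj (mkE Hb) (mkE Hw).
  rewrite /line_adj /= ndisj2 !inE negb_and negbK; apply/orP; right.
  by rewrite !negb_or Nax (eq_sym x0 w) Nwx Nba (eq_sym b w) Nwb.
split => //=.
exact: (adj_neq (H:=line_graph G) Lac).
split => //=.
  by rewrite line_adj_sym.
rewrite -val_eqE /=; apply/negP => /eqP E.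
have : b \in [set a; w] by rewrite -E set22.
by rewrite !inE => /orP [] /eqP Eb; [rewrite Eb eqxx in Nba | rewrite Eb eqxx in Nwb].
Qed.

Lemma nb_other (G : sgraph) (x y : vert G) : #|[set z | adj x z]| = 2 -> adj x y ->
  exists y', y' != y /\ forall z, adj x z = (z == y) || (z == y').
Proof.
move=> H2 Hy; move/eqP/cards2P: H2 => [p [q [Npq E]]].
have : y \in [set p; q] by rewrite -E inE.
rewrite !inE => /orP [] /eqP ->.
  by exists q; split; [rewrite eq_sym|] => // z; rewrite -in_set2 -E inE.
by exists p; split => // z; rewrite orbC -in_set2 -E inE.
Qed.

Lemma iso_from_seq (G : sgraph) n (s : seq (vert G)) (z0 : vert G) :
  size s = n.+3 -> uniq s -> (forall z, z \in s) ->
  (forall i j : 'I_n.+3, adj (nth z0 s i) (nth z0 s j) = cyc_adj i j) ->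
  isomorphic G (cycle_graph n).
Proof.
move=> Hs Hu Hin Hadj.
pose g (i : 'I_n.+3) := nth z0 s i.
have Hi z : index z s < n.+3 by rewrite -Hs index_mem.
pose f z : 'I_n.+3 := Ordinal (Hi z).
have gf : cancel f g by move=> z; rewrite /g /f /= nth_index.
have fg : cancel g f.
  move=> i; apply: val_inj; rewrite /f /g /= index_uniq //.
  by rewrite Hs.
exists f; split; first by exists g.
by move=> x y; rewrite /= -Hadj -/(g _) -/(g _) !gf.
Qed.

Section Tri.
Variable G : sgraph.
Variable x0 : vert G.
Hypothesis Hk : forall x : vert G, #|[set y | adj x y]| = 2.
Hypothesis Htr : forall x y z : vert G, adj x y -> adj y z -> x != z -> adj x z.

Definition Rr (x y : vert G) := (x == y) || adj x y.
Definition cls x := [set y | Rr x y].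
Definition Pc := [set cls x | x : vert G].

Lemma Rr_sym x y : Rr x y = Rr y x.
Proof. by rewrite /Rr eq_sym adj_sym. Qed.

Lemma Rr_trans x y z : Rr x y -> Rr y z -> Rr x z.
Proof.
rewrite /Rr => /orP [/eqP -> //| Hxy] /orP [/eqP <- | Hyz]; first by rewrite Hxy orbT.
by case: eqVneq => //= Nxz; apply: Htr Hyz Nxz.
Qed.

Lemma clsE x y : Rr x y -> cls x = cls y.
Proof.
move=> Rxy; apply/setP => z; rewrite !inE; apply/idP/idP => H.
  by apply: Rr_trans H; rewrite Rr_sym.
exact: Rr_trans H.
Qed.

Lemma clsR x y : cls x = cls y -> Rr x y.
Proof. move=> E; have : y \in cls y by rewrite inE /Rr eqxx.
by rewrite -E inE. Qed.

Lemma card_cls x : #|cls x| = 3.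
Proof.
have -> : cls x = x |: [set y | adj x y].
  by apply/setP => y; rewrite !inE /Rr eq_sym.
by rewrite cardsU1 Hk inE adj_irr.
Qed.

Variable n : nat.
Hypothesis HP : #|Pc| = n.+1.

Definition fT x : 'I_n.+1 * 'I_3 :=
  (inord (index (cls x) (enum Pc)), inord (index x (enum (cls x)))).
Definition gT (p : 'I_n.+1 * 'I_3) := nth x0 (enum (nth set0 (enum Pc) p.1)) p.2.

Lemma clsP x : cls x \in Pc.
Proof. by apply: imset_f. Qed.

Lemma F1 x : nth set0 (enum Pc) (fT x).1 = cls x.
Proof.
rewrite /fT /= inordK; first by rewrite nth_index // mem_enum clsP.
by rewrite -HP cardE index_mem mem_enum clsP.
Qed.

Lemma F2 x : nth x0 (enum (cls x)) (fT x).2 = x.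
Proof.
have xin : x \in enum (cls x) by rewrite mem_enum inE /Rr eqxx.
rewrite /fT /= inordK; first by rewrite nth_index.
by rewrite -(card_cls x) cardE index_mem.
Qed.

Lemma gfT : cancel fT gT.
Proof. by move=> x; rewrite /gT F1 F2. Qed.

Lemma fgT : cancel gT fT.
Proof.
case=> i j; rewrite /gT /=.
set C := nth set0 (enum Pc) i.
have CP : C \in Pc by rewrite -mem_enum mem_nth // -cardE HP.
case/imsetP: CP => y0 _ EC.
have jlt : j < size (enum C) by rewrite -cardE EC card_cls.
set y := nth x0 (enum C) j.
have yC : y \in C by rewrite -mem_enum mem_nth.
have Ey : cls y = C by rewrite EC; apply/esym/clsE; move: yC; rewrite EC inE.
rewrite /fT Ey /y (@index_uniq _ x0 j (enum C)) ?enum_uniq // /C (@index_uniq _ set0 i (enum Pc)) ?enum_uniq ?inord_val //.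
by rewrite -cardE HP.
Qed.

Lemma tri_adjE x y : tri_adj (fT x) (fT y) = adj x y.
Proof.
rewrite /tri_adj.
have E1 : ((fT x).1 == (fT y).1) = Rr x y.
  apply/eqP/idP => [E | Rxy]; first by apply: clsR; rewrite -F1 E F1.
  by rewrite /fT /= (clsE Rxy).
rewrite E1 /Rr; case: eqVneq => [-> | Nxy] /=; first by rewrite eqxx adj_irr.
case Axy: (adj x y) => //=.
apply/negP => /eqP E2.
have C := clsE (x := x) (y := y); rewrite /Rr Axy orbT in C.
have Hx := F2 x; have Hy := F2 y; rewrite /fT /= in Hx Hy.
rewrite E2 (C isT) in Hx; rewrite Hx in Hy.
by rewrite Hy eqxx in Nxy.
Qed.

End Tri.

Lemma tri_iso (G : sgraph) (x0 : vert G) :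
  (forall x : vert G, #|[set y | adj x y]| = 2) ->
  (forall x y z : vert G, adj x y -> adj y z -> x != z -> adj x z) ->
  disjoint_union_of_C3 G.
Proof.
move=> Hk Htr.
have HP : #|Pc G| = (#|Pc G|.-1).+1.
  by rewrite prednK //; apply/card_gt0P; exists (cls x0); apply: clsP.
exists (#|Pc G|.-1).+1; exists (@fT G (#|Pc G|.-1)); split.
  exists (@gT G x0 (#|Pc G|.-1)); [exact: (gfT x0 Hk HP) | exact: (fgT x0 Hk Htr HP)].
by move=> x y; rewrite /= (tri_adjE x0 Hk Htr HP).
Qed.

Lemma neqF (T : eqType) (x y : T) : x != y -> ((x == y) = false) * ((y == x) = false).
Proof. by move=> H; split; [apply: negbTE | rewrite eq_sym; apply: negbTE]. Qed.

Lemma deg2 (G : sgraph) l u : srg_with G 2 l u ->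
  isomorphic G (cycle_graph 1) \/ isomorphic G (cycle_graph 2) \/ disjoint_union_of_C3 G.
Proof.
move=> [HV Hk Hl Hu].
case/card_gt0P: HV => x0 _.
have [a Ha] : exists a, adj x0 a.
  have : 0 < #|[set y | adj x0 y]| by rewrite Hk.
  by case/card_gt0P => a; rewrite inE; exists a.
have [b [Nba Ax0]] := nb_other (Hk x0) Ha.
have Hb : adj x0 b by rewrite Ax0 eqxx orbT.
case Eab: (adj a b).
  right; right; apply: (tri_iso x0 Hk) => x y z Hxy Hyz Nxz.
  have l_pos : 0 < l.
    rewrite -(Hl x0 a Ha); apply/card_gt0P; exists b; by rewrite inE Hb Eab.
  have Hyx : adj y x by rewrite adj_sym.
  have [y' [_ Ay]] := nb_other (Hk y) Hyx.
  have : 0 < #|[set w | adj y w && adj x w]| by rewrite Hl // adj_sym.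
  case/card_gt0P => w; rewrite inE Ay => /andP [/orP [] /eqP Ew Hxw].
    by rewrite Ew adj_irr in Hxw.
  have Ez : z = y'.
    by move: Hyz; rewrite Ay => /orP [] /eqP // Ezx; rewrite Ezx eqxx in Nxz.
  by rewrite Ez -Ew.
have Nab : a != b by rewrite eq_sym.
have Eba : adj b a = false by rewrite adj_sym.
have Hax : adj a x0 by rewrite adj_sym.
have Hbx : adj b x0 by rewrite adj_sym.
have [a' [Na' Aa]] := nb_other (Hk a) Hax.
have [b' [Nb' Ab]] := nb_other (Hk b) Hbx.
have Ha' : adj a a' by rewrite Aa eqxx orbT.
have Hb' : adj b b' by rewrite Ab eqxx orbT.
have u_pos : 0 < u.
  rewrite -(Hu a b Nab (negbT Eab)); apply/card_gt0P; exists x0.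
  by rewrite inE adj_sym Ha adj_sym Hb.
have closed z : [|| z == x0, z == a, z == b, z == a' | z == b'].
  apply/negPn/negP; rewrite !negb_or => /and5P [Z1 Z2 Z3 Z4 Z5].
  have Nzx : ~~ adj z x0 by rewrite adj_sym Ax0 negb_or Z2 Z3.
  have := Hu z x0 Z1 Nzx.
  have -> : [set w | adj z w && adj x0 w] = set0.
    apply/setP => w; rewrite !inE Ax0; apply/negP => /andP [Hzw /orP [] /eqP Ew].
      by move: Hzw; rewrite Ew adj_sym Aa (negbTE Z1) (negbTE Z4).
    by move: Hzw; rewrite Ew adj_sym Ab (negbTE Z1) (negbTE Z5).
  by rewrite cards0 => u0; rewrite -u0 in u_pos.
have Ax0' z : adj z x0 = (z == a) || (z == b) by rewrite adj_sym Ax0.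
have Aa' z : adj z a = (z == x0) || (z == a') by rewrite adj_sym Aa.
have Ab' z : adj z b = (z == x0) || (z == b') by rewrite adj_sym Ab.
have Nxa := adj_neq Ha; have Nxb := adj_neq Hb.
have Naa := adj_neq Ha'; have Nbb := adj_neq Hb'.
have Na'b : a' != b.
  by apply/negP => /eqP E; move: Eab; rewrite Aa E eqxx orbT.
have Nab' : a != b'.
  by apply/negP => /eqP E; move: Eba; rewrite Ab E eqxx orbT.
case Eab': (a' == b').
  left; move/eqP: Eab' => Eab'; subst b'.
  apply: (@iso_from_seq _ 1 [:: x0; a; a'; b] x0) => //.
  - by rewrite /= !inE !negb_or Nxa Nxb Nab Naa Na'b andbT (eq_sym x0 a') Na'.
  - by move=> z; have := closed z; rewrite !inE orbb => /or4P [] ->; rewrite ?orbT.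
  move=> i j; case: i => [[|[|[|[|i]]]] Hi] //; case: j => [[|[|[|[|j]]]] Hj] //;
  rewrite /cyc_adj /= ?adj_irr ?Ax0 ?Aa ?Ab ?Ax0' ?Aa' ?Ab' ?eqxx
     ?(neqF Nxa, neqF Nxb, neqF Nab, neqF Naa, neqF Na'b, neqF Na', neqF Nbb) //.
right; left.
have Nb'a' : b' != a' by rewrite eq_sym Eab'.
have Ha'b' : adj a' b'.
  have Nb : ~~ adj a' b by rewrite Ab' negb_or Na' Eab'.
  have : 0 < #|[set w | adj a' w && adj b w]| by rewrite Hu.
  case/card_gt0P => w; rewrite inE Ab => /andP [Hw /orP [] /eqP Ew].
    by move: Hw; rewrite Ew Ax0' (negbTE Na'b) eq_sym (negbTE Naa).
  by rewrite -Ew.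
have Nxb' : x0 != b' by rewrite eq_sym.
apply: (@iso_from_seq _ 2 [:: x0; a; a'; b'; b] x0) => //.
- rewrite /= !inE !negb_or Nxa Nxb Nab Naa Na'b (eq_sym x0 a') Na' Nxb' Nab' Eab' /=.
  by rewrite eq_sym adj_neq.
- by move=> z; have := closed z; rewrite !inE => /orP [->|/orP [->|/orP [->|/orP [->|->]]]]; rewrite ?orbT.
have Hb'a' : adj b' a' by rewrite adj_sym.
move=> i j; case: i => [[|[|[|[|[|i]]]]] Hi] //; case: j => [[|[|[|[|[|j]]]]] Hj] //;
rewrite /cyc_adj /= ?adj_irr ?Ha'b' ?Hb'a' ?Ax0 ?Aa ?Ab ?Ax0' ?Aa' ?Ab' ?eqxx
   ?(neqF Nxa, neqF Nxb, neqF Nab, neqF Naa, neqF Na'b, neqF Na', neqF Nbb, neqF Nxb', neqF Nab', neqF Nb'a') //.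
Qed.

Theorem mainTheorem10 (G : sgraph) :
  strongly_regular G ->
  ~ isomorphic G (cycle_graph 0) ->
  ~ isomorphic G (cycle_graph 1) ->
  ~ isomorphic G (cycle_graph 2) ->
  ~ disjoint_union_of_C3 G ->
  exists m, m <= 2 /\ ~ strongly_regular (iter_line m G).
Proof.
move=> [k [l [u Hs]]] N3 N4 N5 NT.
case: (classic (strongly_regular (line_graph G))) => HL1; last by exists 1; split.
case: (classic (strongly_regular (line_graph (line_graph G)))) => HL2; last by exists 2; split.
exfalso; have Hs' := Hs; case: Hs' => [HV Hk _ _].
case/card_gt0P: HV => x0 _.
case: k Hk Hs => [|[|[|k]]] Hk Hs.
- apply: (@no_edge_line G) HL1 => x y; apply/negP => Hxy.
  have : y \in [set y | adj x y] by rewrite inE.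
  by move/cards0_eq: (Hk x) => ->; rewrite inE.
- by apply: (@no_edge_line (line_graph G)) HL2; apply: deg1_line.
- by case: (deg2 Hs) => [|[|]].
case: HL1 => [d [l1 [u1 [_ Hd _ _]]]].
have [e [f [g [e' [f' [g' [Hef Hfg Heg Neg [Hef' Hfg' Heg' Neg']]]]]]]] :=
  @line3 G k.+3 x0 isT Hk.
exact: (not_srg_line Hd Hef Hfg Heg Neg Hef' Hfg' Heg' Neg' HL2).
Qed.
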